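(* For any two $X$-trees $T_1$ and $T_2$, one has $\mathbb{M}(T_1)=\mathbb{M}(T_2)$ if and only if $T_1\simeq T_2$.
   Context: Let $X$ be a finite set with $|X|=n\ge 3$. An $X$-tree is a finite tree $T=(V,E)$ whose set of degree-1 vertices is exactly $X$ and which has no vertices of degree $2$; $T_1\simeq T_2$ means there is a graph isomorphism $T_1\to T_2$ fixing every element of $X$. A cord is a $2$-subset $xy$ of $X$. For each cord $xy$, $\lambda^T_{xy}:\mathbb{R}^E\to\mathbb{R}$, $\omega\mapsto\sum_{e\in E(x|y)}\omega(e)$ where $E(x|y)$ is the edge set of the path from $x$ to $y$. $\mathbb{M}(T)$ is the matroid on ground set $\binom{X}{2}$ represented over $\mathbb{R}$ by $xy\mapsto\lambda^T_{xy}$ (i.e. a set of cords is independent iff the corresponding forms are linearly independent). Equality of matroids means equality of their collections of independent sets on the common ground set $\binom{X}{2}$. *)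

(* Defs.v *)
From HB Require Import structures.
From mathcomp Require Import all_boot all_order all_algebra.
Set Implicit Arguments. Unset Strict Implicit. Unset Printing Implicit Defensive.
Import Order.TTheory GRing.Theory Num.Theory.

Record Xtree (X : finType) := XTree {
  V : finType;
  adj : rel V;
  adj_sym : symmetric adj;
  adj_irr : irreflexive adj;
  adj_conn : forall u v : V, connect adj u v;
  adj_acyc : forall s : seq V, 2 < size s -> uniq s -> ~~ cycle adj s;
  leaf : X -> V;
  leaf_inj : injective leaf;
  leaf_deg1 : forall v : V, (#|[pred w | adj v w]| == 1) = (v \in codom leaf);
  no_deg2 : forall v : V, #|[pred w | adj v w]| != 2
}.

Arguments adj {X} x _ _ : rename.
Arguments leaf {X} x _ : rename.

Section XtreeDefs.
Variable X : finType.

Definition edges (T : Xtree X) : {set {set V T}} :=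
  [set e : {set V T} | [exists u : V T, exists v : V T, adj T u v && (e == [set u; v])]].

Definition edge (T : Xtree X) := {e : {set V T} | e \in edges T}.

Definition walk_edges (T : Xtree X) (x : V T) (p : seq (V T)) : {set {set V T}} :=
  [set e | has (fun uv : V T * V T => e == [set uv.1; uv.2]) (zip (x :: p) p)].

(* E(x|y): edges on a simple path from x to y (in a tree this path is unique;
   simple paths have fewer than #|V| steps). *)
Definition pathE (T : Xtree X) (x y : V T) : {set {set V T}} :=
  [set e | [exists k : 'I_#|V T|, exists p : k.-tuple (V T),
             [&& path (adj T) x p, last x p == y, uniq (x :: p)
               & e \in walk_edges x p]]].

(* The linear form lambda^T_c : R^E -> R associated with a cord c = {x,y}:
   sum of omega(e) over e in E(x|y). *)
Definition lam (R : realFieldType) (T : Xtree X) (c : {set X})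
  (w : {ffun edge T -> R}) : R :=
  (\sum_(e : edge T | [exists x in c, exists y in c,
                         val e \in pathE (leaf T x) (leaf T y)]) w e)%R.

Definition cords : {set {set X}} := [set c : {set X} | #|c| == 2].

(* A set S of cords is independent in M(T) iff the forms lam_c, c in S,
   are linearly independent over R. *)
Definition indep (R : realFieldType) (T : Xtree X) (S : {set {set X}}) : Prop :=
  forall coef : {set X} -> R,
    (forall w : {ffun edge T -> R}, (\sum_(c in S) coef c * lam c w = 0)%R) ->
    forall c, c \in S -> coef c = 0%R.

Definition matroid_eq (R : realFieldType) (T1 T2 : Xtree X) : Prop :=
  forall S : {set {set X}}, S \subset cords -> (indep R T1 S <-> indep R T2 S).

Definition xtree_iso (T1 T2 : Xtree X) : Prop :=
  exists f : V T1 -> V T2,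
    [/\ bijective f,
        forall u v, adj T2 (f u) (f v) = adj T1 u v
      & forall x, f (leaf T1 x) = leaf T2 x].

End XtreeDefs.

(* Main.v *)
Require Import Defs.
From HB Require Import structures.
From mathcomp Require Import all_boot all_order all_algebra.
Set Implicit Arguments. Unset Strict Implicit. Unset Printing Implicit Defensive.

Section Tree.
Variable X : finType.
Variable T : Xtree X.
Local Notation V := (V T).
Local Notation adj := (adj T).

Definition rm (p q : V) : rel V := fun x y =>
  adj x y && ~~ (((x == p) && (y == q)) || ((x == q) && (y == p))).
Definition S (p q z : V) : bool := connect (rm p q) p z.

Lemma adjC x y : adj x y = adj y x. Proof. exact: adj_sym. Qed.
Lemma adj_neq x y : adj x y -> x != y.
Proof. by apply: contraTneq => ->; rewrite adj_irr. Qed.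

Lemma rm_sym p q : symmetric (rm p q).
Proof.
move=> x y; rewrite /rm adjC; congr (_ && ~~ _).
by rewrite orbC; case: (x == p); case: (y == q); case: (x == q); case: (y == p).
Qed.

Lemma rmC p q : rm p q =2 rm q p.
Proof. by move=> x y; rewrite /rm orbC. Qed.

Lemma crm_sym p q x y : connect (rm p q) x y = connect (rm p q) y x.
Proof. by apply: sym_connect_sym; apply: rm_sym. Qed.

Lemma S_refl p q : S p q p.
Proof. exact: connect0. Qed.

Lemma S_trans p q y z : S p q y -> connect (rm p q) y z -> S p q z.
Proof. exact: connect_trans. Qed.

Lemma S_eqc p q y z : connect (rm p q) y z -> S p q y = S p q z.
Proof.
move=> h; apply/idP/idP => H; first exact: connect_trans H h.
by apply: connect_trans H _; rewrite crm_sym.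
Qed.

Lemma S_far p q : adj p q -> ~~ S p q q.
Proof.
move=> apq; apply/negP => /connectP [s pth lst].
move: lst; case: (shortenP pth) => s' pth' uq _ lst'.
have sub : subrel (rm p q) adj by move=> x y /andP [].
have pa : path adj p s' := sub_path sub pth'.
case: s' pth' uq lst' pa => [|z s''] pth' uq lst' pa.
  by move: apq; rewrite /= in lst'; rewrite -lst' adj_irr.
case: s'' pth' uq lst' pa => [|z2 s3] pth' uq lst' pa.
  by rewrite /= in lst'; move: pth'; rewrite /= -lst' /rm apq !eqxx.
apply: (negP (adj_acyc (s:=p :: z :: z2 :: s3) _ uq)) => //.
rewrite /cycle rcons_path pa /=.
by move: lst'; rewrite /= => <-; rewrite adjC.
Qed.

Lemma S_total p q z : adj p q -> S p q z || S q p z.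
Proof.
move=> apq.
pose A := [pred y | S p q y || S q p y].
have cl : closed adj A.
  have one : forall x y, adj x y -> x \in A -> y \in A.
    move=> x y axy; rewrite !inE.
    case rxy : (rm p q x y).
      move=> /orP [h|h]; apply/orP; [left|right]; apply: (connect_trans h).
        exact: connect1.
      by apply: connect1; rewrite -rmC.
    move: rxy; rewrite /rm axy /= => /negbFE.
    case/orP => /andP [_ /eqP ->]; last by rewrite S_refl.
    by rewrite S_refl orbT.
  move=> x y axy; apply/idP/idP; first exact: one.
  by apply: one; rewrite adjC.
have h := closed_connect cl (adj_conn p z).
by move: h; rewrite !inE S_refl /= => <-.
Qed.

Lemma S_excl p q z : adj p q -> S p q z -> S q p z -> False.
Proof.
move=> apq h1 h2; apply: (negP (S_far apq)).
apply: (connect_trans h1); rewrite crm_sym.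
have e : rm q p =2 rm p q by move=> ??; rewrite rmC.
by rewrite /S (eq_connect e) in h2.
Qed.

Lemma S_neg p q z : adj p q -> S q p z = ~~ S p q z.
Proof.
move=> apq; have := S_total z apq; have := @S_excl p q z apq.
by case: (S p q z); case: (S q p z) => // H _; case: H.
Qed.

Definition sameE (p q r s : V) :=
  ((r == p) && (s == q)) || ((r == q) && (s == p)).

Lemma S_adj p q r s : adj r s -> ~~ sameE p q r s -> S p q r = S p q s.
Proof. by move=> ars ne; apply: S_eqc; apply: connect1; rewrite /rm ars. Qed.

Lemma connect_sub (e1 e2 : rel V) x y :
  (forall u v, connect e1 x u -> e1 u v -> e2 u v) ->
  connect e1 x y -> connect e2 x y.
Proof.
move=> H /connectP [s pth ->].
apply/connectP; exists s => //.
elim: s x pth H => [|z s IH] x //= /andP [exz pth] H.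
have e2xz : e2 x z by apply: H exz; exact: connect0.
rewrite e2xz /=; apply: IH => // u v cu; apply: H.
exact: connect_trans (connect1 exz) cu.
Qed.

Lemma compat p q r s : adj p q -> adj r s ->
  exists i j, forall z, ~~ ((S p q z == i) && (S r s z == j)).
Proof.
move=> apq ars.
case same: (sameE p q r s).
  case/orP: same => /andP [/eqP -> /eqP ->].
    by exists true, false => z; case: (S p q z).
  exists true, true => z; apply/negP => /andP [/eqP h1 /eqP h2].
  exact: (S_excl apq h1 h2).
have al : S p q r = S p q s by apply: S_adj; rewrite ?same.
have same' : ~~ sameE r s p q.
  move: same; rewrite /sameE; apply: contraFN.
  by case/orP => /andP [/eqP -> /eqP ->]; rewrite !eqxx ?orbT.
have be : S r s p = S r s q by apply: S_adj.
exists (~~ S p q r), (~~ S r s p) => z; apply/negP => /andP [/eqP h1 /eqP h2].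
have key : forall t, t \in [:: p; q] -> connect (rm p q) t z -> ~~ connect (rm p q) t r ->
    S r s z = S r s p.
  move=> t tin ctz ntr.
  have nts : ~~ connect (rm p q) t s.
    apply: contra ntr => cts.
    apply: (connect_trans cts); apply: connect1; rewrite rm_sym /rm ars /=.
    by move: same; rewrite /sameE => ->.
  have : connect (rm r s) t z.
    apply: (connect_sub _ ctz) => u v ctu /andP [auv _].
    rewrite /rm auv /=; apply/negP => /orP [] /andP [/eqP eu _].
      by move: ntr; rewrite -eu ctu.
    by move: nts; rewrite -eu ctu.
  move/S_eqc => <-.
  by move: tin; rewrite !inE => /orP [] /eqP ->; rewrite ?be.
case hz : (S p q z).
  have : S r s z = S r s p.
    apply: (key p); [by rewrite inE eqxx | exact: hz | ].
    by move: h1; rewrite hz /S; case: (connect (rm p q) p r).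
  by rewrite h2; case: (S r s p).
have hz' : S q p z by rewrite S_neg // hz.
have cqz : connect (rm p q) q z.
  by move: hz'; rewrite /S (eq_connect (rmC q p)).
have : S r s z = S r s p.
  apply: (key q); [by rewrite !inE eqxx orbT | exact: cqz | ].
  have : S q p r = ~~ S p q r by rewrite S_neg.
  move: h1; rewrite hz => h1'.
  rewrite -h1' /S (eq_connect (rmC q p)) => ->; done.
by rewrite h2; case: (S r s p).
Qed.


Lemma branchOf u z : u != z -> exists2 n, adj u n & S n u z.
Proof.
move=> uz; have /connectP [s pth lst] := adj_conn u z.
move: lst; case: (shortenP pth) => s' pth' uq _ lst.
case: s' pth' uq lst => [|n s''] /=; first by move=> _ _ zu; move: uz; rewrite zu eqxx.
move=> /andP [aun pth''] /andP [nin uq] lst.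
exists n => //; apply/connectP; exists s'' => //.
apply: (sub_in_path (P := predC1 u)) pth''.
  move=> x y; rewrite !inE => xu yu axy; rewrite /rm axy /=.
  by rewrite (negbTE xu) (negbTE yu) !andbF.
apply/allP => x xin; rewrite inE; apply: contraNneq nin => <-.
by [].
Qed.

Lemma S_nb_same u n n' : adj u n -> adj u n' -> n != n' -> S n' u n = false.
Proof.
move=> aun aun' nn'.
have -> : S n' u n = S n' u u.
  apply: S_adj; first by rewrite adjC.
  rewrite /sameE negb_or !negb_and; apply/andP; split; apply/orP; [left|right].
    by [].
  exact: adj_neq aun'.
by apply/negbTE; apply: S_far; rewrite adjC.
Qed.

Lemma branch_disj u n n' z : adj u n -> adj u n' -> n != n' -> S n u z -> S n' u z -> False.
Proof.
move=> aun aun' nn' h h'.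
have anu : adj n u by rewrite adjC.
have an'u : adj n' u by rewrite adjC.
have [i [j H]] := compat anu an'u.
have Hu := H u; have Hn := H n; have Hn' := H n'; have Hz := H z.
have e1 : S n u u = false by apply/negbTE/S_far.
have e2 : S n' u u = false by apply/negbTE/S_far.
have e3 : S n' u n = false by apply: S_nb_same.
have e4 : S n u n' = false by apply: S_nb_same => //; rewrite eq_sym.
move: Hu Hn Hn' Hz; rewrite e1 e2 e3 e4 h h' !S_refl; clear H.
by case: i; case: j.
Qed.

Lemma inBranch u k m z : adj u k -> adj u m -> S k u z -> S m u z -> k = m.
Proof.
move=> auk aum h1 h2; apply/eqP; apply/negP => /negP km.
exact: (branch_disj auk aum km h1 h2).
Qed.

Lemma subbranch u w n z : adj u w -> adj w n -> n != u -> S n w z -> S w u z.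
Proof.
move=> auw awn nu h.
have awu : adj w u by rewrite adjC.
have := S_total z auw; case/orP => // h2.
by case: (branch_disj awn awu nu h h2).
Qed.

Lemma farSide p q u : adj p q -> u != p -> u != q ->
  exists2 n, adj u n & forall z, S p q z != S p q u -> S n u z.
Proof.
move=> apq up uq.
pose r := if S p q u then q else p.
have rS : S p q r != S p q u.
  rewrite /r; case hu : (S p q u); last by rewrite S_refl.
  by rewrite (negbTE (S_far apq)).
have ur : u != r by rewrite /r; case: (S p q u).
have [n aun nr] := branchOf ur.
exists n => // z hz.
have anu : adj n u by rewrite adjC.
have [i [j H]] := compat apq anu.
have Hu := H u; have Hn := H n; have Hr := H r; have Hz := H z.
have e1 : S n u u = false by apply/negbTE/S_far.
have e2 : S p q n = S p q u.
  apply: S_adj; first by rewrite adjC.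
  by rewrite /sameE (negbTE up) (negbTE uq) !andbF.
move: Hu Hn Hr Hz rS hz; rewrite e1 e2 nr S_refl; clear H.
by case: (S p q u); case: (S p q r); case: (S p q z); case: (S n u z); case: i; case: j.
Qed.

Definition maj (a b c : bool) := [|| a && b, a && c | b && c].

Definition isMed (v x y z : V) :=
  [forall p, forall q, adj p q ==> (S p q v == maj (S p q x) (S p q y) (S p q z))].

Lemma isMedP v x y z : reflect (forall p q, adj p q -> S p q v = maj (S p q x) (S p q y) (S p q z))
  (isMed v x y z).
Proof.
apply: (iffP idP).
  by move=> /forallP H p q apq; have /forallP/(_ q)/implyP/(_ apq)/eqP := H p.
by move=> H; apply/forallP => p; apply/forallP => q; apply/implyP => apq; rewrite H.
Qed.

Lemma med_uniq v v' x y z : isMed v x y z -> isMed v' x y z -> v = v'.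
Proof.
move=> /isMedP h /isMedP h'; apply/eqP; apply/negP => /negP vv.
have [n avn nv'] := branchOf vv.
have anv : adj n v by rewrite adjC.
by have := h n v anv; rewrite -(h' n v anv) nv' (negbTE (S_far anv)).
Qed.

Lemma medAt u x y z :
  (forall n, adj u n -> ~~ maj (S n u x) (S n u y) (S n u z)) -> isMed u x y z.
Proof.
move=> H; apply/isMedP => p q apq.
case up : (u == p).
  move/eqP: up => up; subst p; rewrite S_refl.
  have := H q (apq); rewrite !(S_neg _ apq).
  by case: (S u q x); case: (S u q y); case: (S u q z).
case uq : (u == q).
  move/eqP: uq => uq; subst q; rewrite (negbTE (S_far apq)).
  have aup : adj u p by rewrite adjC.
  by have := H p aup; case: maj.
have [n aun Hn] := farSide apq (negbT up) (negbT uq).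
have hx : S n u x || (S p q x == S p q u).
  by have [_|/Hn ->] := eqVneq (S p q x) (S p q u); rewrite ?orbT.
have hy : S n u y || (S p q y == S p q u).
  by have [_|/Hn ->] := eqVneq (S p q y) (S p q u); rewrite ?orbT.
have hz : S n u z || (S p q z == S p q u).
  by have [_|/Hn ->] := eqVneq (S p q z) (S p q u); rewrite ?orbT.
have := H n aun; move: hx hy hz.
move: (S p q u) (S p q x) (S p q y) (S p q z) (S n u x) (S n u y) (S n u z).
by do 7! case.
Qed.


Lemma medNot u n x y z : adj u n -> maj (S n u x) (S n u y) (S n u z) -> ~~ isMed u x y z.
Proof.
move=> aun hm; apply/negP => /isMedP/(_ n u); rewrite adjC => /(_ aun).
by rewrite (negbTE (S_far _)) ?hm // adjC.
Qed.

Lemma maj_neg a b c : maj (~~ a) (~~ b) (~~ c) = ~~ maj a b c.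
Proof. by case: a; case: b; case: c. Qed.

Lemma sepSplit p q a b c d v : adj p q -> S p q a = S p q b -> S p q c = S p q d ->
  S p q a != S p q c -> isMed v a b c -> isMed v a b d.
Proof.
move=> apq hab hcd hac /isMedP hv; apply/isMedP => r s ars.
rewrite hv //.
have [i [j H]] := compat apq ars.
have Ha := H a; have Hb := H b; have Hc := H c; have Hd := H d; clear H.
move: Ha Hb Hc Hd hac; rewrite -hab -hcd.
move: (S p q a) (S p q c) (S r s a) (S r s b) (S r s c) (S r s d) i j.
by do 8! case.
Qed.

Definition Bset x y z v := [set g : V * V | adj g.1 g.2 &&
  (S g.1 g.2 v != maj (S g.1 g.2 x) (S g.1 g.2 y) (S g.1 g.2 z))].

Lemma med_ex x y z : exists v, isMed v x y z.
Proof.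
case: (arg_minnP (fun v => #|Bset x y z v|) (isT : predT x)) => v _ vmin.
exists v; apply/isMedP => p q apq; apply/eqP/negP => bad.
pose r := if S p q v then q else p.
have rS : S p q r != S p q v.
  rewrite /r; case hu : (S p q v); last by rewrite S_refl.
  by rewrite (negbTE (S_far apq)).
have mr : maj (S p q x) (S p q y) (S p q z) = S p q r.
  by move: bad rS; case: maj; case: (S p q v); case: (S p q r).
have vr : v != r by apply: contraNneq rS => ->.
have [x1 avx1 x1r] := branchOf vr.
have ax1v : adj x1 v by rewrite adjC.
have M : maj (S x1 v x) (S x1 v y) (S x1 v z).
  case se : (sameE p q v x1).
    case/orP: se => /andP [/eqP ev /eqP ex1]; subst v x1.
      have rq : r = q by rewrite /r S_refl.
      move: mr; rewrite !(S_neg _ apq) maj_neg rq (negbTE (S_far apq)) => ->.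
      by [].
    have rp : r = p by rewrite /r (negbTE (S_far apq)).
    by rewrite mr rp S_refl.
  have e1 : S p q x1 = S p q v by symmetry; apply: S_adj => //; rewrite se.
  have [i [j H]] := compat apq ax1v.
  have Hv := H v; have Hx1 := H x1; have Hr := H r; have Hx := H x; have Hy := H y;
    have Hz := H z; clear H.
  move: Hv Hx1 Hr Hx Hy Hz; rewrite e1 x1r S_refl (negbTE (S_far ax1v)).
  move: rS mr.
  move: (S p q v) (S p q r) (S p q x) (S p q y) (S p q z) (S x1 v x) (S x1 v y) (S x1 v z) i j.
  by do 10! case.
have pr : Bset x y z x1 \proper Bset x y z v.
  apply/properP; split.
    apply/subsetP => [[g1 g2]]; rewrite !inE /= => /andP [ag hg]; rewrite ag /=.
    case se : (sameE g1 g2 v x1); last first.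
      by rewrite (S_adj avx1) ?se.
    exfalso; move: hg.
    case/orP: se => /andP [/eqP ev /eqP ex1]; subst g1 g2.
      by rewrite (negbTE (S_far avx1)) !(S_neg _ ax1v) maj_neg M.
    by rewrite S_refl M.
  exists (x1, v); rewrite !inE /= ax1v /=.
    by rewrite (negbTE (S_far ax1v)) M.
  by rewrite S_refl M.
by have := proper_card pr; rewrite ltnNge (vmin x1 isT).
Qed.

Definition med x y z := xchoose (med_ex x y z).

Lemma medP x y z : isMed (med x y z) x y z.
Proof. exact: (xchooseP (med_ex x y z)). Qed.

Lemma med_eq v x y z : isMed v x y z -> med x y z = v.
Proof. by move=> h; apply: med_uniq (medP x y z) h. Qed.


Definition deg (v : V) := #|[pred w | adj v w]|.

Lemma leaf_nb x : exists y, adj (leaf T x) y /\ forall w, adj (leaf T x) w -> w = y.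
Proof.
have := leaf_deg1 (leaf T x); rewrite codom_f => /card1P [y Hy].
exists y; split; first by have := Hy y; rewrite !inE eqxx.
by move=> w aw; have := Hy w; rewrite !inE aw => /esym/eqP.
Qed.

Lemma pend x y z : adj (leaf T x) y -> S (leaf T x) y z = (z == leaf T x).
Proof.
move=> axy; case: (eqVneq z (leaf T x)) => [->|nz]; first exact: S_refl.
have nz2 : leaf T x != z by rewrite eq_sym.
have [n an nz'] := branchOf nz2.
have [y' [ay' uy]] := leaf_nb x.
have ny : n = y by rewrite (uy n an) (uy y axy).
subst n; apply/negbTE/negP => h.
by apply: (S_excl axy h nz').
Qed.

Lemma deg_ge3 u v : adj u v -> u \notin codom (leaf T) ->
  exists n1 n2, [/\ adj u n1, adj u n2, n1 != n2, n1 != v & n2 != v].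
Proof.
move=> auv nl.
have d1 : deg u != 1 by rewrite /deg (leaf_deg1 u).
have d2 : deg u != 2 by apply: no_deg2.
have d0 : 0 < deg u by apply/card_gt0P; exists v.
have : 1 < #|[predD1 [pred w | adj u w] & v]|.
  have := cardD1 v [pred w | adj u w]; rewrite inE auv /= -/(deg u) => e.
  by move: d1 d2 d0; rewrite e; case: #|_| => [|[|]].
case/card_gt1P => n1 [n2 [h1 h2 h12]]; exists n1, n2.
by move: h1 h2; rewrite !inE => /andP [-> ->] /andP [-> ->].
Qed.

Definition Sep (u z : V) := [set g : V * V | adj g.1 g.2 && (S g.1 g.2 u != S g.1 g.2 z)].

Lemma leaf_in_side u n : adj u n -> exists x, S n u (leaf T x).
Proof.
move=> aun; have anu : adj n u by rewrite adjC.
case: (arg_maxnP (fun z => #|Sep u z|) (S_refl n u)) => z0 hz0 zmax.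
suff : z0 \in codom (leaf T) by case/codomP => x e; exists x; rewrite -e.
rewrite -leaf_deg1; apply/negP => /negP d1.
have z0u : z0 != u by apply: contraTneq hz0 => ->; apply: S_far.
have [z1 az1 z1u] := branchOf z0u.
have d2 : deg z0 != 2 by apply: no_deg2.
have : 1 < deg z0.
  have d0 : 0 < deg z0 by apply/card_gt0P; exists z1.
  by move: d1 d2 d0; rewrite /deg; case: #|_| => [|[|]].
case/card_gt1P => a [b [ha hb hab]].
have [z' [az' z'1]] : exists z', adj z0 z' /\ z' != z1.
  case: (eqVneq a z1) => [e|ne]; last by exists a.
  by exists b; split => //; rewrite -e eq_sym.
have az'0 : adj z' z0 by rewrite adjC.
have hz' : S n u z'.
  rewrite -(S_adj az'); first exact: hz0.
  rewrite /sameE; apply/negP => /orP [] /andP [/eqP e1 /eqP e2].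
    subst; apply: (branch_disj az1 az' _ z1u (S_refl _ _)).
    by rewrite eq_sym.
  by move: z0u; rewrite e1 eqxx.
have z1' : z1 != z' by rewrite eq_sym.
have su : S z0 z' u := subbranch az'0 az1 z1' z1u.
have pr : Sep u z0 \proper Sep u z'.
  apply/properP; split.
    apply/subsetP => [[g1 g2]]; rewrite !inE /= => /andP [ag hg]; rewrite ag /=.
    case se : (sameE g1 g2 z0 z'); last by rewrite -(S_adj az') ?se.
    exfalso; move: hg.
    case/orP: se => /andP [/eqP ev /eqP ex1]; subst g1 g2.
      by rewrite su S_refl.
    by rewrite !(S_neg _ az') su S_refl.
  exists (z0, z'); rewrite !inE /= az' /= su.
    by rewrite (negbTE (S_far az')).
  by rewrite S_refl.
have h := zmax z' hz'; move/proper_card: pr; rewrite ltnNge; move: h; rewrite /geq /= => ->; done.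
Qed.


Lemma maj_C12 a b c : maj a b c = maj b a c. Proof. by case: a; case: b; case: c. Qed.
Lemma maj_C23 a b c : maj a b c = maj a c b. Proof. by case: a; case: b; case: c. Qed.

Lemma med_C12 x y z : med x y z = med y x z.
Proof.
apply: med_eq; apply/isMedP => p q apq; rewrite maj_C12.
by move/isMedP: (medP y x z) => ->.
Qed.

Lemma med_C23 x y z : med x y z = med x z y.
Proof.
apply: med_eq; apply/isMedP => p q apq; rewrite maj_C23.
by move/isMedP: (medP x z y) => ->.
Qed.

Lemma med_xxz x z : med x x z = x.
Proof.
by apply: med_eq; apply/isMedP => p q apq; case: (S p q x); case: (S p q z).
Qed.

Lemma no4 p q r s v z x y : adj p q -> adj r s ->
  S p q z != S p q v -> S r s z != S r s v ->
  S p q x != S p q v -> S r s x == S r s v ->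
  S p q y == S p q v -> S r s y != S r s v -> False.
Proof.
move=> apq ars.
have [i [j H]] := compat apq ars.
have Hv := H v; have Hz := H z; have Hx := H x; have Hy := H y; clear H.
move: Hv Hz Hx Hy.
move: (S p q v) (S p q z) (S p q x) (S p q y) (S r s v) (S r s z) (S r s x) (S r s y) i j.
by do 10! case.
Qed.

Lemma exstep a b c a' b' c' : med a b c = med a' b' c' ->
  [|| med a b a' == med a b c, med a b b' == med a b c | med a b c' == med a b c].
Proof.
set v := med a b c => e.
have hv := medP a b c.
have hv' : isMed v a' b' c' by rewrite e; exact: medP.
apply: contraT => /norP [n1 /norP [n2 n3]]; exfalso.
have dart : forall x, med a b x != v -> exists p q,
    [/\ adj p q, S p q a != S p q b & S p q x != S p q v].
  move=> x nx.
  have : ~~ isMed v a b x by apply: contra nx => h; apply/eqP; exact: med_eq.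
  case/forallPn => p /forallPn [q]; rewrite negb_imply => /andP [apq hq].
  exists p, q; split => //; move/isMedP: hv => /(_ p q apq) hv1; move: hq; rewrite hv1;
  by case: (S p q a); case: (S p q b); case: (S p q c); case: (S p q x).
have [p1 [q1 [a1 s1 f1]]] := dart a' n1.
have [p2 [q2 [a2 s2 f2]]] := dart b' n2.
have [p3 [q3 [a3 s3 f3]]] := dart c' n3.
move/isMedP: hv' => hv'.
have h1 := hv' p1 q1 a1; have h2 := hv' p2 q2 a2; have h3 := hv' p3 q3 a3.
have nb1 : (S p1 q1 b' == S p1 q1 v) && (S p1 q1 c' == S p1 q1 v).
  by move: h1 f1; case: (S p1 q1 v); case: (S p1 q1 a'); case: (S p1 q1 b'); case: (S p1 q1 c').
have nb2 : (S p2 q2 a' == S p2 q2 v) && (S p2 q2 c' == S p2 q2 v).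
  by move: h2 f2; case: (S p2 q2 v); case: (S p2 q2 a'); case: (S p2 q2 b'); case: (S p2 q2 c').
have nb3 : (S p3 q3 a' == S p3 q3 v) && (S p3 q3 b' == S p3 q3 v).
  by move: h3 f3; case: (S p3 q3 v); case: (S p3 q3 a'); case: (S p3 q3 b'); case: (S p3 q3 c').
case/andP: nb1 => b1 c1; case/andP: nb2 => a2' c2; case/andP: nb3 => a3' b3.
have far : forall p q, S p q a != S p q b ->
    (S p q a != S p q v) || (S p q b != S p q v).
  by move=> p q; case: (S p q a); case: (S p q b); case: (S p q v).
have F1 := far _ _ s1; have F2 := far _ _ s2; have F3 := far _ _ s3.
pose k1 := S p1 q1 a != S p1 q1 v; pose k2 := S p2 q2 a != S p2 q2 v;
  pose k3 := S p3 q3 a != S p3 q3 v.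
have kb : forall p q, S p q a != S p q b -> (S p q a == S p q v) -> S p q b != S p q v.
  by move=> p q; case: (S p q a); case: (S p q b); case: (S p q v).
have pick : forall z, (z = a \/ z = b) -> True by [].
case k1e : (S p1 q1 a != S p1 q1 v); case k2e : (S p2 q2 a != S p2 q2 v);
  case k3e : (S p3 q3 a != S p3 q3 v).
- exact: (no4 a1 a2 k1e k2e f1 a2' b1 f2).
- exact: (no4 a1 a2 k1e k2e f1 a2' b1 f2).
- exact: (no4 a1 a3 k1e k3e f1 a3' c1 f3).
- move/negbFE: k2e => k2e; move/negbFE: k3e => k3e.
  exact: (no4 a2 a3 (kb _ _ s2 k2e) (kb _ _ s3 k3e) f2 b3 c2 f3).
- exact: (no4 a2 a3 k2e k3e f2 b3 c2 f3).
- move/negbFE: k1e => k1e; move/negbFE: k3e => k3e.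
  exact: (no4 a1 a3 (kb _ _ s1 k1e) (kb _ _ s3 k3e) f1 a3' c1 f3).
- move/negbFE: k1e => k1e; move/negbFE: k2e => k2e.
  exact: (no4 a1 a2 (kb _ _ s1 k1e) (kb _ _ s2 k2e) f1 a2' b1 f2).
- move/negbFE: k1e => k1e; move/negbFE: k2e => k2e.
  exact: (no4 a1 a2 (kb _ _ s1 k1e) (kb _ _ s2 k2e) f1 a2' b1 f2).
Qed.


Lemma med_notleaf a b c x : a != b -> a != c -> b != c ->
  med (leaf T a) (leaf T b) (leaf T c) != leaf T x.
Proof.
move=> ab ac bc; have [y [axy _]] := leaf_nb x.
apply/eqP => e; move/isMedP: (medP (leaf T a) (leaf T b) (leaf T c)) => /(_ _ _ axy).
rewrite e S_refl !pend // !(inj_eq (@leaf_inj _ T)).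
move: ab ac bc; case: (a =P x) => [->|_]; case: (b =P x) => [->|_];
  case: (c =P x) => [->|_]; by rewrite ?eqxx.
Qed.

Definition Nq (a b c d : X) := [exists p, exists q, adj p q &&
  (S p q (leaf T a) != S p q (leaf T b)) && (S p q (leaf T c) != S p q (leaf T d))].

Lemma md_eqN a b c d :
  (med (leaf T a) (leaf T b) (leaf T c) == med (leaf T a) (leaf T b) (leaf T d)) = ~~ Nq a b c d.
Proof.
apply/idP/idP.
  move/eqP => e; apply/negP => /existsP [p /existsP [q /andP [/andP [apq h1] h2]]].
  move/isMedP: (medP (leaf T a) (leaf T b) (leaf T c)) => /(_ p q apq).
  rewrite e; move/isMedP: (medP (leaf T a) (leaf T b) (leaf T d)) => /(_ p q apq) ->.
  move: h1 h2; case: (S p q (leaf T a)); case: (S p q (leaf T b));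
    case: (S p q (leaf T c)); by case: (S p q (leaf T d)).
move=> nN; apply/eqP; symmetry; apply: med_eq; apply/isMedP => p q apq.
move/isMedP: (medP (leaf T a) (leaf T b) (leaf T c)) => /(_ p q apq) ->.
have : ~~ (adj p q && (S p q (leaf T a) != S p q (leaf T b)) &&
         (S p q (leaf T c) != S p q (leaf T d))).
  by apply: contra nN => h; apply/existsP; exists p; apply/existsP; exists q.
rewrite apq /=.
move: (S p q (leaf T a)) (S p q (leaf T b)) (S p q (leaf T c)) (S p q (leaf T d)).
by do 4! case.
Qed.

Lemma three_br u k1 k2 k3 x y z : adj u k1 -> adj u k2 -> adj u k3 ->
  k1 != k2 -> k1 != k3 -> k2 != k3 -> S k1 u x -> S k2 u y -> S k3 u z -> isMed u x y z.
Proof.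
move=> a1 a2 a3 n12 n13 n23 h1 h2 h3; apply: medAt => m am.
apply/negP; rewrite /maj => /orP [/andP [g1 g2] | /orP [/andP [g1 g2] | /andP [g1 g2]]].
- by move: n12; rewrite (inBranch a1 am h1 g1) (inBranch a2 am h2 g2) eqxx.
- by move: n13; rewrite (inBranch a1 am h1 g1) (inBranch a3 am h3 g2) eqxx.
- by move: n23; rewrite (inBranch a2 am h2 g1) (inBranch a3 am h3 g2) eqxx.
Qed.

Lemma med_surj (x0 : X) v : exists a b c : X, med (leaf T a) (leaf T b) (leaf T c) = v.
Proof.
case: (boolP (v \in codom (leaf T))) => [/codomP [x ->]|nl].
  by exists x, x, x; rewrite med_xxz.
have vx : v != leaf T x0 by apply: contraNneq nl => ->; apply: codom_f.
have [n avn _] := branchOf vx.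
have [n1 [n2 [a1 a2 n12 n1n n2n]]] := deg_ge3 avn nl.
have [a ha] := leaf_in_side avn; have [b hb] := leaf_in_side a1;
  have [c hc] := leaf_in_side a2.
exists a, b, c; apply: med_eq; apply: (three_br avn a1 a2 _ _ n12 ha hb hc).
  by rewrite eq_sym. by rewrite eq_sym.
Qed.

Definition md (a b c : X) := med (leaf T a) (leaf T b) (leaf T c).

Definition adjCond (u v : V) := exists a b c d : X,
  [/\ [/\ md a b c = u, md a b d = u, md c d a = v & md c d b = v], u != v &
   forall e, md a b e = u -> md c d e = v -> md a c e = u \/ md a c e = v].

Lemma side_pair u v : adj u v -> exists a b : X,
  [/\ S u v (leaf T a), S u v (leaf T b) &
      forall n, adj u n -> ~~ (S n u (leaf T a) && S n u (leaf T b))].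
Proof.
move=> auv; have avu : adj v u by rewrite adjC.
case: (boolP (u \in codom (leaf T))) => [/codomP [x ex]|nl].
  exists x, x; rewrite -ex S_refl; split => // n aun.
  by rewrite (negbTE (S_far _)) // adjC.
have [n1 [n2 [a1 a2 n12 n1v n2v]]] := deg_ge3 auv nl.
have [a ha] := leaf_in_side a1; have [b hb] := leaf_in_side a2.
exists a, b; split.
- exact: (subbranch avu a1 n1v ha).
- exact: (subbranch avu a2 n2v hb).
- move=> n aun; apply/negP => /andP [g1 g2].
  by move: n12; rewrite (inBranch a1 aun ha g1) (inBranch a2 aun hb g2) eqxx.
Qed.

Lemma isMed_C23 v x y z : isMed v x y z = isMed v x z y.
Proof.
apply/isMedP/isMedP => H p q apq; by rewrite H // maj_C23.
Qed.

Lemma isMed_C12 v x y z : isMed v x y z = isMed v y x z.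
Proof.
apply/isMedP/isMedP => H p q apq; by rewrite H // maj_C12.
Qed.

Lemma med_side2 u v x z e : adj u v -> S u v x -> S u v e -> S v u z ->
  (forall n, adj u n -> n != v -> ~~ (S n u x && S n u e)) -> isMed u x z e.
Proof.
move=> auv hx he hz H; apply: medAt => n aun.
case: (eqVneq n v) => [->|nv].
  by rewrite !(S_neg _ auv) hx he /maj /= andbF.
have -> : S n u z = false.
  apply/negP => g; move: nv; rewrite (inBranch aun auv g hz) eqxx //.
have := H n aun nv; rewrite /maj andbF /=.
by case: (S n u x); case: (S n u e).
Qed.

Lemma adj_cond u v : adj u v -> adjCond u v.
Proof.
move=> auv; have avu : adj v u by rewrite adjC.
have [a [b [ha hb Hab]]] := side_pair auv.
have [c [d [hc hd Hcd]]] := side_pair avu.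
exists a, b, c, d; split; first split.
- apply: med_eq; rewrite isMed_C23; apply: (med_side2 auv ha hb hc).
  by move=> n aun _; apply: Hab.
- apply: med_eq; rewrite isMed_C23; apply: (med_side2 auv ha hb hd).
  by move=> n aun _; apply: Hab.
- apply: med_eq; rewrite isMed_C23; apply: (med_side2 avu hc hd ha).
  by move=> n aun _; apply: Hcd.
- apply: med_eq; rewrite isMed_C23; apply: (med_side2 avu hc hd hb).
  by move=> n aun _; apply: Hcd.
- exact: adj_neq.
move=> e hbe hde.
case/orP: (S_total (leaf T e) auv) => he.
  left; apply: med_eq; apply: (med_side2 auv ha he hc).
  move=> n aun nv; apply/negP => /andP [g1 g2].
  have : ~~ isMed u (leaf T a) (leaf T b) (leaf T e).
    by apply: (medNot aun); rewrite /maj g1 g2 /= orbT.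
  by rewrite -hbe medP.
right; apply: med_eq; rewrite isMed_C12; apply: (med_side2 avu hc he ha).
move=> n aun nv; apply/negP => /andP [g1 g2].
have : ~~ isMed v (leaf T c) (leaf T d) (leaf T e).
  by apply: (medNot aun); rewrite /maj g1 g2 /= orbT.
by rewrite -hde medP.
Qed.


Lemma cond_adj u v : adjCond u v -> adj u v.
Proof.
case=> a [b [c [d [[e1 e2 e3 e4] uv H]]]].
apply: contraT => nadj; exfalso.
have [w auw wv] := branchOf uv.
have awu : adj w u by rewrite adjC.
have wnv : w != v by apply: contraNneq nadj => <-.
have [x2 awx2 x2v] := branchOf wnv.
have x2u : x2 != u.
  apply/eqP => ex; subst x2.
  exact: (S_excl awu wv x2v).
have wnl : w \notin codom (leaf T).
  apply/negP => /codomP [x ex]; subst w.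
  have [y [_ uy]] := leaf_nb x.
  by move: x2u; rewrite (uy _ awx2) (uy _ awu) eqxx.
have [n1 [n2 [a1 a2 n12 n1x n2x]]] := deg_ge3 awx2 wnl.
have [n [awn nu nx]] : exists n, [/\ adj w n, n != u & n != x2].
  case: (eqVneq n1 u) => [e|ne]; last by exists n1.
  by exists n2; split => //; rewrite -e eq_sym.
have [e he] := leaf_in_side awn.
have mu1 := medP (leaf T a) (leaf T b) (leaf T c).
have mu2 := medP (leaf T a) (leaf T b) (leaf T d).
have mv1 := medP (leaf T c) (leaf T d) (leaf T a).
have mv2 := medP (leaf T c) (leaf T d) (leaf T b).
rewrite -/(md a b c) e1 in mu1; rewrite -/(md a b d) e2 in mu2.
rewrite -/(md c d a) e3 in mv1; rewrite -/(md c d b) e4 in mv2.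
have fu : S w u u = false by apply/negbTE/S_far.
have pos1 : (S w u (leaf T a) == false) && (S w u (leaf T b) == false) &&
            (S w u (leaf T c)) && (S w u (leaf T d)).
  move/isMedP: mu1 => /(_ _ _ awu); move/isMedP: mu2 => /(_ _ _ awu).
  move/isMedP: mv1 => /(_ _ _ awu); move/isMedP: mv2 => /(_ _ _ awu).
  rewrite fu wv.
  move: (S w u (leaf T a)) (S w u (leaf T b)) (S w u (leaf T c)) (S w u (leaf T d)).
  by do 4! case.
case/andP: pos1 => /andP [/andP [/eqP pa /eqP pb] pc] pd.
have uwa : S u w (leaf T a) by rewrite (S_neg _ awu) pa.
have uwb : S u w (leaf T b) by rewrite (S_neg _ awu) pb.
have xa : S x2 w (leaf T a) = false.
  apply/negP => g; move: x2u; rewrite (inBranch awx2 awu g uwa) eqxx //.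
have xb : S x2 w (leaf T b) = false.
  apply/negP => g; move: x2u; rewrite (inBranch awx2 awu g uwb) eqxx //.
have pos2 : S x2 w (leaf T c) && S x2 w (leaf T d).
  have ax2w : adj x2 w by rewrite adjC.
  move/isMedP: mv1 => /(_ _ _ ax2w); rewrite x2v xa.
  by move: (S x2 w (leaf T c)) (S x2 w (leaf T d)); do 2! case.
case/andP: pos2 => xc xd.
have wue : S w u (leaf T e) := subbranch auw awn nu he.
have xe : S x2 w (leaf T e) = false.
  apply/negP => g; move: nx; rewrite (inBranch awn awx2 he g) eqxx //.
have m1 : md a b e = u.
  apply: med_eq; apply: (sepSplit awu _ _ _ mu1).
  - by rewrite pa pb.
  - by rewrite pc wue.
  - by rewrite pa pc.
have m2 : md c d e = v.
  have ax2w : adj x2 w by rewrite adjC.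
  apply: med_eq; apply: (sepSplit ax2w _ _ _ mv1).
  - by rewrite xc xd.
  - by rewrite xa xe.
  - by rewrite xc xa.
have m3 : md a c e = w.
  apply: med_eq; apply: (three_br awu awx2 awn _ _ _ uwa xc he).
  - by rewrite eq_sym.
  - by rewrite eq_sym.
  - by rewrite eq_sym.
case: (H e m1 m2); rewrite m3 => ew.
  by move: (adj_neq auw); rewrite ew eqxx.
by move: wnv; rewrite ew eqxx.
Qed.


Lemma set2_eq p q u v : p != q -> ([set p; q] == [set u; v]) = sameE p q u v.
Proof.
move=> pq; apply/idP/idP.
  move/eqP => e.
  have hu : u \in [set p; q] by rewrite e !inE eqxx.
  have hv : v \in [set p; q] by rewrite e !inE eqxx orbT.
  have hp : p \in [set u; v] by rewrite -e !inE eqxx.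
  have hq : q \in [set u; v] by rewrite -e !inE eqxx orbT.
  move: hu hp hq; rewrite !inE /sameE.
  have qp : q != p by rewrite eq_sym.
  case/orP => /eqP ->.
    by move=> _; rewrite (negbTE qp) /= => /eqP ->; rewrite !eqxx.
  by rewrite (negbTE pq) /= => /eqP -> _; rewrite !eqxx orbT.
case/orP => /andP [/eqP -> /eqP ->] //.
by rewrite setUC.
Qed.

Lemma mem_zip1 (s t : seq V) u v : (u, v) \in zip s t -> u \in s.
Proof.
elim: s t => [|a s IH] [|b t] //=; rewrite inE => /orP [/eqP [-> _]|/IH h].
  by rewrite inE eqxx.
by rewrite inE h orbT.
Qed.

Lemma mem_zip2 (s t : seq V) u v : (u, v) \in zip s t -> v \in t.
Proof.
elim: s t => [|a s IH] [|b t] //=; rewrite inE => /orP [/eqP [_ ->]|/IH h].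
  by rewrite inE eqxx.
by rewrite inE h orbT.
Qed.

Lemma walk_rm p q x s : adj p q -> path adj x s ->
  ~~ has (fun uv : V * V => [set p; q] == [set uv.1; uv.2]) (zip (x :: s) s) ->
  path (rm p q) x s.
Proof.
move=> apq; elim: s x => [|z s IH] x //= /andP [axz pth] /norP [h1 h2].
rewrite IH // andbT /rm axz /=.
by move: h1; rewrite set2_eq ?adj_neq.
Qed.

Lemma pathE_S p q x y : adj p q -> ([set p; q] \in pathE x y) = (S p q x != S p q y).
Proof.
move=> apq; rewrite /pathE inE; apply/idP/idP.
  case/existsP => k /existsP [s /and4P [pth /eqP lst uq hw]].
  rewrite -lst; clear lst; move: hw; rewrite /walk_edges inE.
  elim: (tval s) x pth uq => [|z s' IH] x //= /andP [axz pth] /andP [xn uq].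
  case/orP => [he|hr].
    have rest : ~~ has (fun uv : V * V => [set p; q] == [set uv.1; uv.2]) (zip (z :: s') s').
      apply/hasP => [[[u v] uin /= /eqP e]].
      have xin : x \in [set u; v] by rewrite -e; move/eqP: he => ->; rewrite !inE eqxx.
      move: xin; rewrite !inE => /orP [] /eqP ex; subst.
        by move: xn; rewrite (mem_zip1 uin).
      by move: xn; rewrite inE (mem_zip2 uin) orbT.
    have := walk_rm apq pth rest => pr.
    have -> : S p q (last z s') = S p q z.
      by symmetry; apply: S_eqc; apply/connectP; exists s'.
    move: he; rewrite set2_eq ?adj_neq // /sameE.
    case/orP => /andP [/eqP -> /eqP ->]; first by rewrite S_refl (S_far apq).
    by rewrite S_refl (negbTE (S_far apq)).
  case se : (sameE p q x z).
    move: se; rewrite /sameE => /orP [] /andP [/eqP ex /eqP ez]; subst.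
      have he : [set p; q] == [set (p, q).1; (p, q).2] by [].
      have rest : ~~ has (fun uv : V * V => [set p; q] == [set uv.1; uv.2]) (zip (q :: s') s').
        apply/hasP => [[[u v] uin /= /eqP e]].
        have xin : p \in [set u; v] by rewrite -e !inE eqxx.
        move: xin; rewrite !inE => /orP [] /eqP ex; subst.
          by move: xn; rewrite (mem_zip1 uin).
        by move: xn; rewrite inE (mem_zip2 uin) orbT.
      have := walk_rm apq pth rest => pr.
      have -> : S p q (last q s') = S p q q.
        by symmetry; apply: S_eqc; apply/connectP; exists s'.
      by rewrite S_refl (S_far apq).
    have he : [set p; q] == [set (q, p).1; (q, p).2] by rewrite /= setUC.
    have rest : ~~ has (fun uv : V * V => [set p; q] == [set uv.1; uv.2]) (zip (p :: s') s').
      apply/hasP => [[[u v] uin /= /eqP e]].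
      have xin : q \in [set u; v] by rewrite -e !inE eqxx orbT.
      move: xin; rewrite !inE => /orP [] /eqP ex; subst.
        by move: xn; rewrite (mem_zip1 uin).
      by move: xn; rewrite inE (mem_zip2 uin) orbT.
    have := walk_rm apq pth rest => pr.
    have -> : S p q (last p s') = S p q p.
      by symmetry; apply: S_eqc; apply/connectP; exists s'.
    by rewrite S_refl (negbTE (S_far apq)).
  rewrite (S_adj axz) ?se //.
  exact: IH.
move=> hd.
have /connectP [s pth lst] := adj_conn x y.
move: lst; case: (shortenP pth) => s' pth' uq _ lst.
have sz : size s' < #|V|.
  have := card_uniqP uq; rewrite /= => e.
  by have := max_card (mem (x :: s')); rewrite e.
apply/existsP; exists (Ordinal sz); apply/existsP; exists (in_tuple s').
rewrite pth' -lst eqxx uq /= /walk_edges inE.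
apply: contraR hd => nh.
apply/eqP; apply: S_eqc; apply/connectP; exists s' => //.
exact: walk_rm.
Qed.

Lemma edge_dart (e : edge T) : exists p q, adj p q /\ val e = [set p; q].
Proof.
case: e => e /=; rewrite /edges inE => /existsP [p /existsP [q /andP [apq /eqP ->]]].
by exists p, q.
Qed.

End Tree.

From mathcomp Require Import lra.
Import GRing.Theory Num.Theory.
Local Open Scope ring_scope.

Section Mat.
Variable X : finType.
Variable R : realFieldType.
Variable T : Xtree X.
Local Notation V := (V T).
Local Notation adj := (adj T).

Definition sepE (e : edge T) (c : {set X}) :=
  [exists x in c, exists y in c, val e \in pathE (leaf T x) (leaf T y)].
Definition sepd (p q : V) (c : {set X}) :=
  [exists x in c, exists y in c, S p q (leaf T x) != S p q (leaf T y)].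

Lemma sepE_dart e p q c : adj p q -> val e = [set p; q] -> sepE e c = sepd p q c.
Proof.
move=> apq ev; rewrite /sepE /sepd ev.
apply/existsP/existsP => [[x /andP [xc /existsP [y /andP [yc h]]]]|
  [x /andP [xc /existsP [y /andP [yc h]]]]]; exists x; rewrite xc /=;
  apply/existsP; exists y; rewrite yc /=.
  by rewrite -pathE_S.
by rewrite pathE_S.
Qed.

Lemma in_edges p q : adj p q -> [set p; q] \in edges T.
Proof.
move=> apq; rewrite /edges inE; apply/existsP; exists p; apply/existsP; exists q.
by rewrite apq eqxx.
Qed.

Definition Zc (coef : {set X} -> R) (Sc : {set {set X}}) :=
  forall p q, adj p q -> \sum_(c in Sc) coef c * (sepd p q c)%:R = 0.

Lemma lam_sum (coef : {set X} -> R) (Sc : {set {set X}}) (w : {ffun edge T -> R}) :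
  \sum_(c in Sc) coef c * lam c w =
  \sum_(e : edge T) w e * \sum_(c in Sc) coef c * (sepE e c)%:R.
Proof.
rewrite (eq_bigr (fun c => \sum_(e : edge T) coef c * ((sepE e c)%:R * w e))); last first.
  move=> c _; rewrite /lam big_mkcond mulr_sumr; apply: eq_bigr => e _.
  by rewrite /sepE; case: ifP => _; rewrite ?mul1r ?mul0r ?mulr0.
rewrite exchange_big; apply: eq_bigr => e _; rewrite mulr_sumr; apply: eq_bigr => c _.
by rewrite mulrA mulrC mulrA [w e * _]mulrC.
Qed.

Lemma zero_iff (coef : {set X} -> R) (Sc : {set {set X}}) :
  (forall w : {ffun edge T -> R}, \sum_(c in Sc) coef c * lam c w = 0) <-> Zc coef Sc.
Proof.
split.
  move=> H p q apq.
  pose e0 : edge T := exist _ [set p; q] (in_edges apq).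
  have [w wE] : {w : {ffun edge T -> R} | forall e, w e = (e == e0)%:R}.
    by exists [ffun e => (e == e0)%:R] => e; rewrite ffunE.
  have h0 := H w; rewrite lam_sum (bigD1 e0) //= in h0.
  rewrite [X in _ + X]big1 ?addr0 in h0; last by move=> e ne; rewrite wE (negbTE ne) mul0r.
  rewrite wE eqxx mul1r in h0.
  rewrite -[RHS]h0; apply: eq_bigr => c _; congr (_ * _%:R).
  by rewrite (@sepE_dart e0 p q c apq).
move=> H w; rewrite lam_sum big1 // => e _.
have [p [q [apq ev]]] := edge_dart e.
rewrite (eq_bigr (fun c => coef c * (sepd p q c)%:R)); first by rewrite H // mulr0.
by move=> c _; rewrite (sepE_dart _ apq ev).
Qed.

Lemma indepE (Sc : {set {set X}}) :
  indep R T Sc <-> (forall coef, Zc coef Sc -> forall c, c \in Sc -> coef c = 0).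
Proof.
split=> H coef hz; apply: H; first by apply/zero_iff.
by apply/zero_iff.
Qed.


Lemma sepd2 p q x y : sepd p q [set x; y] = (S p q (leaf T x) != S p q (leaf T y)).
Proof.
apply/existsP/idP => [[u /andP [uin /existsP [v /andP [vin h]]]]|h].
  move: uin vin h; rewrite !inE => /orP [] /eqP -> /orP [] /eqP ->; rewrite ?eqxx //.
  by rewrite eq_sym.
by exists x; rewrite !inE eqxx /=; apply/existsP; exists y; rewrite !inE eqxx orbT.
Qed.

Lemma set4E (A B C D : {set X}) : [set A; B; C; D] = A |: (B |: (C |: [set D])).
Proof. by apply/setP => z; rewrite !inE !orbA. Qed.

Lemma sum4 (F : {set X} -> R) A B C D :
  A != B -> A != C -> A != D -> B != C -> B != D -> C != D ->
  \sum_(s in [set A; B; C; D]) F s = F A + F B + F C + F D.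
Proof.
move=> ab ac ad bc bd cd.
rewrite set4E big_setU1 ?big_setU1 ?big_set1 /= ?addrA //; rewrite !inE ?negb_or.
- by rewrite cd.
- by rewrite bc bd.
- by rewrite ab ac ad.
Qed.

Lemma set2_neq (x y u v : X) : x \notin [set u; v] -> [set x; y] != [set u; v].
Proof. by move=> h; apply: contraNneq h => <-; rewrite !inE eqxx. Qed.

Lemma set2_neq' (x y u v : X) : y \notin [set u; v] -> [set x; y] != [set u; v].
Proof. by move=> h; apply: contraNneq h => <-; rewrite !inE eqxx orbT. Qed.

Definition Sc4 (a b c d : X) := [set [set a; c]; [set b; d]; [set a; d]; [set b; c]].

Lemma pend_sepd z y x1 x2 : adj (leaf T z) y ->
  sepd (leaf T z) y [set x1; x2] = ((x1 == z) != (x2 == z)).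
Proof. by move=> h; rewrite sepd2 !pend // !(inj_eq (@leaf_inj _ T)). Qed.

Lemma indep4 a b c d : a != b -> a != c -> a != d -> b != c -> b != d -> c != d ->
  (indep R T (Sc4 a b c d) <-> Nq T a b c d).
Proof.
move=> ab ac ad bc bd cd.
have ba : b != a by rewrite eq_sym.
have ca : c != a by rewrite eq_sym.
have da : d != a by rewrite eq_sym.
have cb : c != b by rewrite eq_sym.
have db : d != b by rewrite eq_sym.
have dc : d != c by rewrite eq_sym.
have n1 : [set a; c] != [set b; d] by apply: set2_neq; rewrite !inE negb_or ab ad.
have n2 : [set a; c] != [set a; d] by apply: set2_neq'; rewrite !inE negb_or ca cd.
have n3 : [set a; c] != [set b; c] by apply: set2_neq; rewrite !inE negb_or ab ac.
have n4 : [set b; d] != [set a; d] by apply: set2_neq; rewrite !inE negb_or ba bd.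
have n5 : [set b; d] != [set b; c] by apply: set2_neq'; rewrite !inE negb_or db dc.
have n6 : [set a; d] != [set b; c] by apply: set2_neq; rewrite !inE negb_or ab ac.
rewrite indepE /Sc4; split.
  move=> H; apply: contraT => nN; exfalso.
  pose coef := fun s : {set X} => if s == [set a; c] then 1 else if s == [set b; d] then 1
     else if s == [set a; d] then -1 else if s == [set b; c] then -1 else 0 : R.
  have Z : Zc coef [set [set a; c]; [set b; d]; [set a; d]; [set b; c]]; last first.
    have := H coef Z [set a; c]; rewrite !inE eqxx /= => /(_ isT).
    by rewrite /coef eqxx => /eqP; rewrite oner_eq0.
  move=> p q apq; rewrite sum4 // !sepd2.
  have m1 : [set b; d] != [set a; c] by rewrite eq_sym.
  have m2 : [set a; d] != [set a; c] by rewrite eq_sym.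
  have m3 : [set b; c] != [set a; c] by rewrite eq_sym.
  have m4 : [set a; d] != [set b; d] by rewrite eq_sym.
  have m5 : [set b; c] != [set b; d] by rewrite eq_sym.
  have m6 : [set b; c] != [set a; d] by rewrite eq_sym.
  have -> : coef [set a; c] = 1 by rewrite /coef eqxx.
  have -> : coef [set b; d] = 1 by rewrite /coef (negbTE m1) eqxx.
  have -> : coef [set a; d] = -1 by rewrite /coef (negbTE m2) (negbTE m4) eqxx.
  have -> : coef [set b; c] = -1 by rewrite /coef (negbTE m3) (negbTE m5) (negbTE m6) eqxx.
  have : ~~ (adj p q && (S p q (leaf T a) != S p q (leaf T b)) &&
         (S p q (leaf T c) != S p q (leaf T d))).
    by apply: contra nN => h; apply/existsP; exists p; apply/existsP; exists q.
  rewrite apq /=.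
  move: (S p q (leaf T a)) (S p q (leaf T b)) (S p q (leaf T c)) (S p q (leaf T d)).
  by do 4! case => //=; rewrite ?mulr1 ?mulr0 ?addr0 ?add0r ?subrr //; lra.
case/existsP => p /existsP [q /andP [/andP [apq h1] h2]] coef hz.
have [ya [aa _]] := leaf_nb T a; have [yb [bb _]] := leaf_nb T b.
have [yc [cc _]] := leaf_nb T c; have [yd [dd _]] := leaf_nb T d.
have Ea := hz _ _ aa; have Eb := hz _ _ bb; have Ec := hz _ _ cc; have Ed := hz _ _ dd.
have E := hz _ _ apq.
rewrite sum4 // !pend_sepd // !eqxx
  ?(negbTE ab, negbTE ac, negbTE ad, negbTE bc, negbTE bd, negbTE cd,
    negbTE ba, negbTE ca, negbTE da, negbTE cb, negbTE db, negbTE dc) /= in Ea.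
rewrite ?mulr1n ?mulr0n ?mulr1 ?mulr0 ?addr0 ?add0r in Ea.
rewrite sum4 // !pend_sepd // !eqxx
  ?(negbTE ab, negbTE ac, negbTE ad, negbTE bc, negbTE bd, negbTE cd,
    negbTE ba, negbTE ca, negbTE da, negbTE cb, negbTE db, negbTE dc) /= in Eb.
rewrite ?mulr1n ?mulr0n ?mulr1 ?mulr0 ?addr0 ?add0r in Eb.
rewrite sum4 // !pend_sepd // !eqxx
  ?(negbTE ab, negbTE ac, negbTE ad, negbTE bc, negbTE bd, negbTE cd,
    negbTE ba, negbTE ca, negbTE da, negbTE cb, negbTE db, negbTE dc) /= in Ec.
rewrite ?mulr1n ?mulr0n ?mulr1 ?mulr0 ?addr0 ?add0r in Ec.
rewrite sum4 // !pend_sepd // !eqxx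
  ?(negbTE ab, negbTE ac, negbTE ad, negbTE bc, negbTE bd, negbTE cd,
    negbTE ba, negbTE ca, negbTE da, negbTE cb, negbTE db, negbTE dc) /= in Ed.
rewrite ?mulr1n ?mulr0n ?mulr1 ?mulr0 ?addr0 ?add0r in Ed.
rewrite sum4 // !sepd2 in E.
have E' : coef [set a; c] + coef [set b; d] = 0 \/ coef [set a; d] + coef [set b; c] = 0.
  move: E h1 h2.
  move: (S p q (leaf T a)) (S p q (leaf T b)) (S p q (leaf T c)) (S p q (leaf T d)).
  by do 4! case => //=; rewrite ?mulr1 ?mulr0 ?addr0 ?add0r => E; [right|left|left|right].
move=> s; rewrite !inE => /orP [/orP [/orP [] |] |] /eqP ->; case: E'; lra.
Qed.

End Mat.

Section Gen.
Variable X : finType.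

Definition dist3 (a b c : X) := [&& a != b, a != c & b != c].

Lemma md_C12 (T : Xtree X) a b c : md T a b c = md T b a c.
Proof. exact: med_C12. Qed.
Lemma md_C23 (T : Xtree X) a b c : md T a b c = md T a c b.
Proof. exact: med_C23. Qed.

Definition rep (a b c : X) := if a == b then a else if a == c then a else b.

Lemma md_rot (T : Xtree X) a b c : md T a b c = md T c a b.
Proof. by rewrite md_C23 md_C12. Qed.

Lemma md_rep (T : Xtree X) a b c : ~~ dist3 a b c -> md T a b c = leaf T (rep a b c).
Proof.
rewrite /dist3 /rep; case: (eqVneq a b) => [<-|ab] /=; first by rewrite /md med_xxz.
case: (eqVneq a c) => [<-|ac] /=; first by rewrite md_C23 /md med_xxz.
by rewrite negbK => /eqP <-; rewrite md_C12 md_C23 /md med_xxz.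
Qed.

Lemma md_nl (T : Xtree X) a b c x : dist3 a b c -> md T a b c != leaf T x.
Proof. by case/and3P => ab ac bc; apply: med_notleaf. Qed.

Lemma dist_of (T : Xtree X) a b c a' b' c' :
  md T a b c = md T a' b' c' -> dist3 a' b' c' -> dist3 a b c.
Proof.
move=> e d'; apply: contraT => nd; move: (md_nl T (rep a b c) d').
by rewrite -e md_rep // eqxx.
Qed.

Lemma md_xxy (T : Xtree X) a b : md T a b a = leaf T a.
Proof. by rewrite md_C23 /md med_xxz. Qed.
Lemma md_xyy (T : Xtree X) a b : md T a b b = leaf T b.
Proof. by rewrite md_C12 md_C23 /md med_xxz. Qed.

Variable R : realFieldType.
Variables T1 T2 : Xtree X.
Hypothesis hme : matroid_eq R T1 T2.

Lemma cords4 a b c d : a != b -> a != c -> a != d -> b != c -> b != d -> c != d ->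
  Sc4 a b c d \subset cords X.
Proof.
move=> ab ac ad bc bd cd; apply/subsetP => s; rewrite /Sc4 !inE.
by case/orP => [/orP [/orP []|]|] /eqP ->; rewrite cards2 ?ac ?bd ?ad ?bc.
Qed.

Lemma stepT a b c d : dist3 a b c -> dist3 a b d ->
  md T1 a b c = md T1 a b d -> md T2 a b c = md T2 a b d.
Proof.
case/and3P => ab ac bc /and3P [_ ad bd] e.
case: (eqVneq c d) => [-> //|cd].
apply/eqP; move/eqP: e; rewrite /md !md_eqN => h; apply: contra h => h.
have := hme (cords4 ab ac ad bc bd cd).
move=> [_ H2]; apply/(indep4 R T1 ab ac ad bc bd cd); apply: H2.
exact/(indep4 R T2 ab ac ad bc bd cd).
Qed.

Lemma chainC x a w u : dist3 x a w -> dist3 x w u ->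
  md T1 x a w = md T1 x w u -> md T2 x a w = md T2 x w u.
Proof.
move=> d1 d2 e.
have d1' : dist3 x w a by move: d1; rewrite /dist3; case/and3P => -> -> /=; rewrite eq_sym.
have e' : med (leaf T1 x) (leaf T1 w) (leaf T1 a) = med (leaf T1 x) (leaf T1 w) (leaf T1 u).
  by rewrite -/(md T1 x w a) -md_C23 e.
have := exstep e'; rewrite -/(md T1 x w x) -/(md T1 x w w) -/(md T1 x w u) -/(md T1 x w a).
rewrite md_xxy md_xyy.
case/or3P => /eqP h.
- by move: (md_nl T1 x d1'); rewrite -h eqxx.
- by move: (md_nl T1 w d1'); rewrite -h eqxx.
- by rewrite md_C23 (stepT d2 d1' h).
Qed.

Lemma chainB a b x y z : dist3 a b x -> dist3 y z x ->
  md T1 a b x = md T1 y z x -> md T2 a b x = md T2 y z x.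
Proof.
move=> d1 d2 e.
have e1 : md T1 x a b = md T1 x y z.
  by rewrite md_C12 md_C23 e md_C23 md_C12.
have := exstep e1; rewrite -/(md T1 x a x) -/(md T1 x a y) -/(md T1 x a z) -/(md T1 x a b).
have dxab' : dist3 x a b.
  by move: d1; rewrite /dist3; case/and3P => ab ax bx; rewrite eq_sym ax eq_sym bx ab.
case/or3P => /eqP h.
- by move: (md_nl T1 x dxab'); rewrite -h md_xxy eqxx.
- have dxay : dist3 x a y by apply: dist_of h dxab'.
  have h2 := stepT dxay dxab' h.
  have dxyz : dist3 x y z.
    by move: d2; rewrite /dist3; case/and3P => yz yx zx; rewrite eq_sym yx eq_sym zx yz.
  have := chainC dxay dxyz; rewrite h e1 => /(_ erefl) h3.
  by rewrite (md_rot T2 a b x) (md_rot T2 y z x) -h2 h3.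
- have dxaz : dist3 x a z by apply: dist_of h dxab'.
  have h2 := stepT dxaz dxab' h.
  have dxzy : dist3 x z y.
    by move: d2; rewrite /dist3; case/and3P => yz yx zx; rewrite eq_sym zx eq_sym yx eq_sym yz.
  have := chainC dxaz dxzy; rewrite h e1 [md T1 x z y]md_C23 => /(_ erefl) h3.
  by rewrite (md_rot T2 a b x) (md_rot T2 y z x) -h2 h3 md_C23.
Qed.


Lemma chainA a b c a' b' c' : dist3 a b c -> dist3 a' b' c' ->
  md T1 a b c = md T1 a' b' c' -> md T2 a b c = md T2 a' b' c'.
Proof.
move=> d1 d2 e.
have := exstep e; rewrite -/(md T1 a b a') -/(md T1 a b b') -/(md T1 a b c') -/(md T1 a b c).
case/or3P => /eqP h.
- have ds : dist3 a b a' by apply: dist_of h d1.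
  rewrite -(stepT ds d1 h).
  have d' : dist3 b' c' a'.
    by move: d2; rewrite /dist3; case/and3P => p1 p2 p3; rewrite p3 eq_sym p1 eq_sym p2.
  apply: etrans (chainB ds d' _) _.
    by rewrite h e (md_rot T1 b' c' a').
  by rewrite (md_rot T2 b' c' a').
- have ds : dist3 a b b' by apply: dist_of h d1.
  rewrite -(stepT ds d1 h).
  have d' : dist3 c' a' b'.
    by move: d2; rewrite /dist3; case/and3P => p1 p2 p3; rewrite eq_sym p2 eq_sym p3 p1.
  apply: etrans (chainB ds d' _) _.
    by rewrite h e (md_rot T1 a' b' c').
  by rewrite (md_rot T2 a' b' c').
- have ds : dist3 a b c' by apply: dist_of h d1.
  rewrite -(stepT ds d1 h).
  exact: chainB ds d2 (etrans h e).
Qed.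

Lemma transfer a b c a' b' c' :
  md T1 a b c = md T1 a' b' c' -> md T2 a b c = md T2 a' b' c'.
Proof.
move=> e.
case: (boolP (dist3 a b c)) => d1; case: (boolP (dist3 a' b' c')) => d2.
- exact: chainA.
- by move: (md_nl T1 (rep a' b' c') d1); rewrite e md_rep // eqxx.
- by move: (md_nl T1 (rep a b c) d2); rewrite -e md_rep // eqxx.
- move: e; rewrite !md_rep // => /leaf_inj ->; done.
Qed.

End Gen.

Section Build.
Variable X : finType.
Variable R : realFieldType.
Variables T1 T2 : Xtree X.
Hypothesis hme : matroid_eq R T1 T2.
Hypothesis hme' : matroid_eq R T2 T1.
Variable x0 : X.

Definition fV (v : V T1) : V T2 :=
  let t := odflt (x0, x0, x0) [pick t : X * X * X | md T1 t.1.1 t.1.2 t.2 == v] in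
  md T2 t.1.1 t.1.2 t.2.

Lemma fV_md a b c : fV (md T1 a b c) = md T2 a b c.
Proof.
rewrite /fV; case: pickP => [t /eqP h | H] /=.
  exact: (transfer hme h).
by have := H (a, b, c); rewrite eqxx.
Qed.

Lemma fV_inj : injective fV.
Proof.
move=> u v.
have [a [b [c eu]]] := med_surj x0 u; have [a' [b' [c' ev]]] := med_surj x0 v.
rewrite -eu -ev -/(md T1 a b c) -/(md T1 a' b' c') !fV_md => h.
exact: (transfer hme' h).
Qed.

Lemma fV_leaf x : fV (leaf T1 x) = leaf T2 x.
Proof.
have e : leaf T1 x = md T1 x x x by rewrite /md med_xxz.
by rewrite e fV_md /md med_xxz.
Qed.

Lemma fV_adj u v : adj T1 u v -> adj T2 (fV u) (fV v).
Proof.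
move/adj_cond => [a [b [c [d [[e1 e2 e3 e4] uv H]]]]].
apply: cond_adj; exists a, b, c, d; split; first split.
- by rewrite -e1 fV_md.
- by rewrite -e2 fV_md.
- by rewrite -e3 fV_md.
- by rewrite -e4 fV_md.
- by apply: contra uv => /eqP /fV_inj ->.
move=> e h1 h2.
have g1 : md T1 a b e = u.
  by rewrite -e1; apply: (transfer hme'); rewrite h1 -e1 fV_md.
have g2 : md T1 c d e = v.
  by rewrite -e3; apply: (transfer hme'); rewrite h2 -e3 fV_md.
by case: (H e g1 g2) => h; [left|right]; rewrite -h fV_md.
Qed.

End Build.

Lemma connect_map (A B : finType) (e1 : rel A) (e2 : rel B) (f : A -> B) :
  (forall x y, e2 (f x) (f y) = e1 x y) ->
  forall x y, connect e1 x y -> connect e2 (f x) (f y).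
Proof.
move=> H x y /connectP [s pth ->]; apply/connectP; exists (map f s); last by rewrite last_map.
by elim: s x pth => [|z s IH] x //= /andP [h1 h2]; rewrite H h1 IH.
Qed.

Section Iso.
Variable X : finType.
Variable R : realFieldType.
Variables T1 T2 : Xtree X.
Variable f : V T1 -> V T2.
Variable g : V T2 -> V T1.
Hypothesis fK : cancel f g.
Hypothesis gK : cancel g f.
Hypothesis fadj : forall u v, adj T2 (f u) (f v) = adj T1 u v.
Hypothesis fleaf : forall x, f (leaf T1 x) = leaf T2 x.

Lemma f_inj : injective f. Proof. exact: can_inj fK. Qed.

Lemma S_f p q z : S (f p) (f q) (f z) = S p q z.
Proof.
have rmE : forall x y, rm (f p) (f q) (f x) (f y) = rm p q x y.
  by move=> x y; rewrite /rm fadj !(inj_eq f_inj).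
apply/idP/idP.
  move=> h; have := connect_map (f := g) (e1 := rm (f p) (f q)) (e2 := rm p q) _ h.
  rewrite !fK; apply => a b; rewrite -{2}(gK a) -{2}(gK b) rmE //.
exact: connect_map.
Qed.

Lemma sepd_f p q c : sepd (f p) (f q) c = sepd p q c.
Proof.
rewrite /sepd; apply: eq_existsb => x; congr (_ && _); apply: eq_existsb => y.
by congr (_ && _); rewrite -!fleaf !S_f.
Qed.

Lemma iso_matroid : matroid_eq R T1 T2.
Proof.
move=> Sc _; rewrite !indepE; split=> H coef hz; apply: H.
  move=> p q apq; rewrite -[RHS](hz (f p) (f q)); last by rewrite fadj.
  by apply: eq_bigr => c _; rewrite sepd_f.
move=> p q apq.
have apq' : adj T1 (g p) (g q) by rewrite -fadj !gK.
rewrite -(gK p) -(gK q) -[RHS](hz (g p) (g q) apq').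
by apply: eq_bigr => c _; rewrite sepd_f.
Qed.

End Iso.

Local Close Scope ring_scope.

Theorem mainTheorem8 (X : finType) (hX : 3 <= #|X|) (R : realFieldType)
  (T1 T2 : Xtree X) :
  matroid_eq R T1 T2 <-> xtree_iso T1 T2.
Proof.
split; last first.
  case=> f [[g fK gK] fadj fleaf].
  exact: (iso_matroid R fK gK fadj fleaf).
move=> hme.
have hme' : matroid_eq R T2 T1 by move=> Sc hS; apply: iff_sym; apply: hme.
have [x0 _] : exists x0 : X, true.
  have : 0 < #|X| by apply: leq_trans hX.
  by case/card_gt0P => x _; exists x.
pose f := fV T2 x0 : V T1 -> V T2; pose g := fV T1 x0 : V T2 -> V T1.
have fi : injective f := fV_inj hme hme' (x0 := x0).
have gi : injective g := fV_inj hme' hme (x0 := x0).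
have fb : bijective f by apply: inj_card_bij fi (leq_card g gi).
exists f; split => //; last by move=> x; apply: (fV_leaf hme).
move=> u v; apply/idP/idP; last by apply: (fV_adj hme hme').
pose E1 := [set p : V T1 * V T1 | adj T1 p.1 p.2].
pose E2 := [set p : V T2 * V T2 | adj T2 p.1 p.2].
pose F := fun p : V T1 * V T1 => (f p.1, f p.2).
pose G := fun p : V T2 * V T2 => (g p.1, g p.2).
have Fi : injective F by move=> [a b] [c d] [/fi -> /fi ->].
have Gi : injective G by move=> [a b] [c d] [/gi -> /gi ->].
have sF : [set F p | p in E1] \subset E2.
  apply/subsetP => _ /imsetP [[a b] h ->]; rewrite !inE /=.
  by apply: (fV_adj hme hme'); move: h; rewrite inE.
have sG : [set G p | p in E2] \subset E1.
  apply/subsetP => _ /imsetP [[a b] h ->]; rewrite !inE /=.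
  by apply: (fV_adj hme' hme); move: h; rewrite inE.
have c1 := subset_leq_card sF; rewrite card_imset // in c1.
have c2 := subset_leq_card sG; rewrite card_imset // in c2.
have ce : #|[set F p | p in E1]| = #|E2|.
  by rewrite card_imset //; apply/eqP; rewrite eqn_leq c1 c2.
move/subset_cardP: (ce) => /(_ sF) eqE.
move=> h; have : (f u, f v) \in [set F p | p in E1] by rewrite eqE inE.
by case/imsetP => [[a b]]; rewrite inE /= => hab [/fi -> /fi ->].
Qed.
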